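(* There exist finite category presentations $C,D,E$ and finite nongenerative uncurried profunctor presentations $P:C\nrightarrow D$ and $Q:D\nrightarrow E$ such that $[\![P]\!]\odot[\![Q]\!]:[\![C]\!]\nrightarrow[\![E]\!]$ does not admit a finite uncurried profunctor presentation (i.e. is not isomorphic to $[\![R]\!]$ for any finite uncurried presentation $R:C\nrightarrow E$).
   Context: Category presentations $C$: sorts, function symbols $f:c\to c'$, equations $C_E$ between parallel paths (composable lists of function symbols, possibly empty); finite if all these sets are finite. Provable equality $\approx_C$: the smallest equivalence relation on paths containing $C_E$ and closed under concatenation with composable function symbols; $[\![C]\!]$: sorts as objects, $\approx_C$-classes of paths as morphisms. Profunctors $\mathcal P:\mathcal C\nrightarrow\mathcal D$: categories over $\mathbf 2=\{0\to1\}$ with fibres $\mathcal C,\mathcal D$, equivalently functors $\mathcal C^{op}\times\mathcal D\to\mathbf{Set}$. Composite: $(\mathcal P\odot\mathcal Q)(c,e)=\int^{d}\mathcal P(c,d)\times\mathcal Q(d,e)$, the quotient of $\coprod_d\mathcal P(c,d)\times\mathcal Q(d,e)$ by the equivalence relation generated by $(p,\mathcal Q(g,1)q')\sim(\mathcal P(1,g)p,q')$ for $g:d\to d'$. Uncurried presentations $P:C\nrightarrow D$: a set $\mathrm{Fun}(P)$ of symbols $x:c\to d$ ($c$ a $C$-sort, $d$ a $D$-sort) and a set $P_E$ of equations between cross-paths (paths from a $C$-sort to a $D$-sort) of the category presentation $|P|$ with sorts $\mathrm{Sort}(C)+\mathrm{Sort}(D)$, symbols $\mathrm{Fun}(C)+\mathrm{Fun}(P)+\mathrm{Fun}(D)$,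 equations $C_E+P_E+D_E$; $\approx_P$ is provable equality of $|P|$ restricted to cross-paths; finite if $C,D,\mathrm{Fun}(P),P_E$ are finite; $[\![P]\!]=[\![|P|]\!]$ with $C$-sorts over $0$, $D$-sorts over $1$. A short left cross-path is $f.p$ with $f\in\mathrm{Fun}(C)$, $p\in\mathrm{Fun}(P)$; a right cross-path is $p.g$ with $p\in\mathrm{Fun}(P)$ and $g$ a $D$-path. $P$ is nongenerative if every short left cross-path is $\approx_P$-equal to some right cross-path. *)

(* Defs.v *)
From Stdlib Require Import List.
Import ListNotations.

Definition fin_type (T : Type) : Prop := exists l : list T, forall x : T, In x l.

(** Generic paths: a start sort and a list of symbols (diagrammatic order). *)
Fixpoint pok {S F : Type} (dom cod : F -> S) (a : S) (l : list F) : Prop :=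
  match l with
  | [] => True
  | f :: l' => dom f = a /\ pok dom cod (cod f) l'
  end.

Fixpoint pend {S F : Type} (cod : F -> S) (a : S) (l : list F) : S :=
  match l with
  | [] => a
  | f :: l' => pend cod (cod f) l'
  end.

Record CatPres : Type := {
  sort : Type;
  sym : Type;
  dom : sym -> sort;
  cod : sym -> sort;
  eqn : Type;
  lhs : eqn -> sort * list sym;
  rhs : eqn -> sort * list sym
}.

Definition path (C : CatPres) : Type := (sort C * list (sym C))%type.

Definition is_path (C : CatPres) (p : path C) : Prop :=
  pok (dom C) (cod C) (fst p) (snd p).

Definition psrc (C : CatPres) (p : path C) : sort C := fst p.
Definition ptgt (C : CatPres) (p : path C) : sort C := pend (cod C) (fst p) (snd p).

Definition pcat (C : CatPres) (p q : path C) : path C := (fst p, snd p ++ snd q).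

Definition CatPres_wf (C : CatPres) : Prop :=
  forall e : eqn C,
    is_path C (lhs C e) /\ is_path C (rhs C e) /\
    psrc C (lhs C e) = psrc C (rhs C e) /\ ptgt C (lhs C e) = ptgt C (rhs C e).

Definition CatPres_finite (C : CatPres) : Prop :=
  fin_type (sort C) /\ fin_type (sym C) /\ fin_type (eqn C).

Inductive peq (C : CatPres) : path C -> path C -> Prop :=
| peq_ax : forall e, peq C (lhs C e) (rhs C e)
| peq_refl : forall p, peq C p p
| peq_sym : forall p q, peq C p q -> peq C q p
| peq_trans : forall p q r, peq C p q -> peq C q r -> peq C p r
| peq_pre : forall (g : sym C) p q,
    cod C g = fst p -> cod C g = fst q -> peq C p q ->
    peq C (dom C g, g :: snd p) (dom C g, g :: snd q)
| peq_post : forall (f : sym C) p q,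
    ptgt C p = dom C f -> ptgt C q = dom C f -> peq C p q ->
    peq C (fst p, snd p ++ [f]) (fst q, snd q ++ [f]).

Definition approx (C : CatPres) (p q : path C) : Prop :=
  is_path C p /\ is_path C q /\ peq C p q.

Record UPres (C D : CatPres) : Type := {
  psym : Type;
  pdom : psym -> sort C;
  pcod : psym -> sort D;
  peqn : Type;
  plhs : peqn -> (sort C + sort D) * list ((sym C + psym) + sym D);
  prhs : peqn -> (sort C + sort D) * list ((sym C + psym) + sym D)
}.

Arguments psym {C D} u.
Arguments pdom {C D} u _.
Arguments pcod {C D} u _.
Arguments peqn {C D} u.
Arguments plhs {C D} u _.
Arguments prhs {C D} u _.

Definition tdom {C D : CatPres} (P : UPres C D)
  (x : (sym C + psym P) + sym D) : sort C + sort D :=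
  match x with
  | inl (inl f) => inl (dom C f)
  | inl (inr p) => inl (pdom P p)
  | inr g => inr (dom D g)
  end.

Definition tcod {C D : CatPres} (P : UPres C D)
  (x : (sym C + psym P) + sym D) : sort C + sort D :=
  match x with
  | inl (inl f) => inl (cod C f)
  | inl (inr p) => inr (pcod P p)
  | inr g => inr (cod D g)
  end.

Definition embL_path {C D : CatPres} {X : Type} (p : path C)
  : (sort C + sort D) * list ((sym C + X) + sym D) :=
  (inl (fst p), map (fun f => inl (inl f)) (snd p)).

Definition embR_path {C D : CatPres} {X : Type} (p : path D)
  : (sort C + sort D) * list ((sym C + X) + sym D) :=
  (inr (fst p), map (fun g => inr g) (snd p)).

Definition tlhs {C D : CatPres} (P : UPres C D) (e : (eqn C + peqn P) + eqn D)
  : (sort C + sort D) * list ((sym C + psym P) + sym D) :=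
  match e with
  | inl (inl e) => embL_path (lhs C e)
  | inl (inr e) => plhs P e
  | inr e => embR_path (lhs D e)
  end.

Definition trhs {C D : CatPres} (P : UPres C D) (e : (eqn C + peqn P) + eqn D)
  : (sort C + sort D) * list ((sym C + psym P) + sym D) :=
  match e with
  | inl (inl e) => embL_path (rhs C e)
  | inl (inr e) => prhs P e
  | inr e => embR_path (rhs D e)
  end.

Definition tot {C D : CatPres} (P : UPres C D) : CatPres :=
  {| sort := (sort C + sort D)%type;
     sym := ((sym C + psym P) + sym D)%type;
     dom := tdom P;
     cod := tcod P;
     eqn := ((eqn C + peqn P) + eqn D)%type;
     lhs := tlhs P;
     rhs := trhs P |}.

Definition cross {C D : CatPres} (P : UPres C D) (c : sort C) (d : sort D)
  (p : path (tot P)) : Prop :=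
  is_path (tot P) p /\ psrc (tot P) p = inl c /\ ptgt (tot P) p = inr d.

Definition is_cross {C D : CatPres} (P : UPres C D) (p : path (tot P)) : Prop :=
  exists c d, cross P c d p.

Definition UPres_wf {C D : CatPres} (P : UPres C D) : Prop :=
  forall e : peqn P,
    is_cross P (plhs P e) /\ is_cross P (prhs P e) /\
    psrc (tot P) (plhs P e) = psrc (tot P) (prhs P e) /\
    ptgt (tot P) (plhs P e) = ptgt (tot P) (prhs P e).

Definition UPres_finite {C D : CatPres} (P : UPres C D) : Prop :=
  CatPres_finite C /\ CatPres_finite D /\ fin_type (psym P) /\ fin_type (peqn P).

Definition embL {C D : CatPres} (P : UPres C D) (p : path C) : path (tot P) :=
  embL_path p.
Definition embR {C D : CatPres} (P : UPres C D) (p : path D) : path (tot P) :=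
  embR_path p.

Definition nongenerative {C D : CatPres} (P : UPres C D) : Prop :=
  forall (f : sym C) (p : psym P), cod C f = pdom P p ->
    exists (p' : psym P) (g : path D),
      is_path D g /\ psrc D g = pcod P p' /\
      approx (tot P)
        (inl (dom C f), [inl (inl f); inl (inr p)])
        (inl (pdom P p'), inl (inr p') :: snd (embR P g)).

(** Representatives of elements of ([[P]] (.) [[Q]])(c,e):
    triples (d, p, q) with p a P-cross-path c -> d, q a Q-cross-path d -> e. *)
Definition CompElt {C D E : CatPres} (P : UPres C D) (Q : UPres D E) : Type :=
  (sort D * path (tot P) * path (tot Q))%type.

Definition cvalid {C D E : CatPres} (P : UPres C D) (Q : UPres D E)
  (c : sort C) (e : sort E) (x : CompElt P Q) : Prop :=
  match x with (d, p, q) => cross P c d p /\ cross Q d e q end.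

Inductive ceq {C D E : CatPres} (P : UPres C D) (Q : UPres D E)
  : CompElt P Q -> CompElt P Q -> Prop :=
| ceq_comp : forall c e d p p' q q',
    cross P c d p -> cross P c d p' -> cross Q d e q -> cross Q d e q' ->
    approx (tot P) p p' -> approx (tot Q) q q' ->
    ceq P Q (d, p, q) (d, p', q')
| ceq_slide : forall c e d d' p (g : path D) q',
    cross P c d p -> cross Q d' e q' ->
    is_path D g -> psrc D g = d -> ptgt D g = d' ->
    ceq P Q (d, p, pcat (tot Q) (embL Q g) q') (d', pcat (tot P) p (embR P g), q')
| ceq_refl : forall x, ceq P Q x x
| ceq_sym : forall x y, ceq P Q x y -> ceq P Q y x
| ceq_trans : forall x y z, ceq P Q x y -> ceq P Q y z -> ceq P Q x z.

Definition comp_act {C D E : CatPres} (P : UPres C D) (Q : UPres D E)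
  (f : path C) (h : path E) (x : CompElt P Q) : CompElt P Q :=
  match x with
  | (d, p, q) => (d, pcat (tot P) (embL P f) p, pcat (tot Q) q (embR Q h))
  end.

Definition pres_act {C E : CatPres} (R : UPres C E)
  (f : path C) (h : path E) (x : path (tot R)) : path (tot R) :=
  pcat (tot R) (pcat (tot R) (embL R f) x) (embR R h).

(** [[P]] (.) [[Q]] is isomorphic (as a profunctor [[C]] -/-> [[E]]) to [[R]]:
    a natural family of bijections between the quotient sets, given on
    representatives. *)
Definition comp_iso_pres {C D E : CatPres} (P : UPres C D) (Q : UPres D E)
  (R : UPres C E) : Prop :=
  exists phi : forall (c : sort C) (e : sort E), CompElt P Q -> path (tot R),
    (forall c e x, cvalid P Q c e x -> cross R c e (phi c e x)) /\
    (forall c e x y, cvalid P Q c e x -> cvalid P Q c e y ->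
        ceq P Q x y -> approx (tot R) (phi c e x) (phi c e y)) /\
    (forall c e x y, cvalid P Q c e x -> cvalid P Q c e y ->
        approx (tot R) (phi c e x) (phi c e y) -> ceq P Q x y) /\
    (forall c e y, cross R c e y ->
        exists x, cvalid P Q c e x /\ approx (tot R) (phi c e x) y) /\
    (forall c c' e e' (f : path C) (h : path E) x,
        is_path C f -> psrc C f = c' -> ptgt C f = c ->
        is_path E h -> psrc E h = e -> ptgt E h = e' ->
        cvalid P Q c e x ->
        approx (tot R) (phi c' e' (comp_act P Q f h x))
                       (pres_act R f h (phi c e x))).

(* Main.v *)
Require Import Defs.
From Stdlib Require Import List Arith Lia ClassicalEpsilon.
Import ListNotations.

Definition Cc : CatPres := {| sort := unit; sym := Empty_set; dom := fun _ => tt;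
  cod := fun _ => tt; eqn := Empty_set;
  lhs := fun e : Empty_set => match e with end; rhs := fun e : Empty_set => match e with end |}.
Definition Dd : CatPres := {| sort := unit; sym := unit; dom := fun _ => tt;
  cod := fun _ => tt; eqn := Empty_set;
  lhs := fun e : Empty_set => match e with end; rhs := fun e : Empty_set => match e with end |}.
Definition Ee : CatPres := {| sort := unit; sym := option bool; dom := fun _ => tt;
  cod := fun _ => tt; eqn := Empty_set;
  lhs := fun e : Empty_set => match e with end; rhs := fun e : Empty_set => match e with end |}.

Definition Pp : UPres Cc Dd := Build_UPres Cc Dd unit (fun _ => tt) (fun _ => tt)
  Empty_set (fun e : Empty_set => match e with end) (fun e : Empty_set => match e with end).

Definition QL (b : bool) : (unit + unit) * list ((unit + unit) + option bool) :=
  if b then (inl tt, [inl (inl tt); inl (inr tt)]) else (inl tt, [inl (inr tt); inr (Some true)]).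
Definition QR (b : bool) : (unit + unit) * list ((unit + unit) + option bool) :=
  if b then (inl tt, [inl (inr tt); inr None]) else (inl tt, [inl (inr tt); inr (Some false)]).

Definition Qq : UPres Dd Ee := Build_UPres Dd Ee unit (fun _ => tt) (fun _ => tt) bool QL QR.

Definition run {T S : Type} (step : T -> S -> S) (l : list T) (s : S) : S :=
  fold_left (fun s t => step t s) l s.

Lemma run_app {T S} (step : T -> S -> S) l1 l2 s :
  run step (l1 ++ l2) s = run step l2 (run step l1 s).
Proof. unfold run; apply fold_left_app. Qed.

Lemma run_map {T U S} (f : T -> U) (step : U -> S -> S) l s :
  run step (map f l) s = run (fun t => step (f t)) l s.
Proof. induction l in s |- *; simpl; auto. Qed.

Lemma peq_sound (T : CatPres) {S} (step : sym T -> S -> S) :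
  (forall e s, run step (snd (lhs T e)) s = run step (snd (rhs T e)) s) ->
  forall p q, peq T p q -> forall s, run step (snd p) s = run step (snd q) s.
Proof.
  intros Hax p q H; induction H; intros s.
  - apply Hax.
  - reflexivity.
  - symmetry; auto.
  - rewrite IHpeq1; apply IHpeq2.
  - exact (IHpeq _).
  - cbn [snd]. rewrite !run_app, IHpeq. reflexivity.
Qed.

Inductive Fst := AllA (L : nat) | Hit (k : nat).
Definition stepF (l : option bool) (s : Fst) : Fst :=
  match s with
  | AllA L => match l with None => AllA (S L) | Some _ => Hit L end
  | Hit k => Hit k end.
Definition bound (s : Fst) := match s with AllA L => L | Hit k => k end.
Inductive Ast := AA (L : nat) | HN (b : bool) | HO.
Definition stepA (n : nat) (l : option bool) (s : Ast) : Ast :=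
  match s with
  | AA L => match l with None => AA (S L) | Some d => if Nat.eqb L n then HN d else HO end
  | s' => s' end.
Definition embed (s : Fst) : Ast := match s with AllA L => AA L | Hit _ => HO end.

Lemma runF_hit w k : run stepF w (Hit k) = Hit k.
Proof. induction w; [reflexivity| exact IHw]. Qed.

Lemma runF_bound w s k : run stepF w s = Hit k -> k <= bound s + length w.
Proof.
  induction w in s |- *; intros H.
  - change (s = Hit k) in H; subst; simpl; lia.
  - change (run stepF w (stepF a s) = Hit k) in H. apply IHw in H.
    destruct a, s; simpl in *; lia.
Qed.

Lemma commute n w s : s <> Hit n -> run stepF w s <> Hit n ->
  run (stepA n) w (embed s) = embed (run stepF w s).
Proof.
  induction w in s |- *; intros H1 H2; [reflexivity|].
  change (run (stepA n) w (stepA n a (embed s)) = embed (run stepF w (stepF a s))).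
  change (run stepF w (stepF a s) <> Hit n) in H2.
  assert (H3 : stepF a s <> Hit n).
  { intro E. rewrite E, runF_hit in H2. auto. }
  rewrite <- (IHw _ H3 H2). f_equal.
  destruct s as [L|k], a as [d|]; simpl in *; try reflexivity.
  destruct (Nat.eqb_spec L n); [subst; congruence | reflexivity].
Qed.

Definition stepP (t : (Empty_set + unit) + unit) (s : Fst) : Fst :=
  match t with inr _ => stepF None s | _ => s end.
Definition stepQ (t : (unit + unit) + option bool) (s : Fst) : Fst :=
  match t with inl (inl _) => stepF None s | inl (inr _) => s | inr l => stepF l s end.
Definition Iv (x : CompElt Pp Qq) : Fst :=
  match x with (d, p, q) => run stepQ (snd q) (run stepP (snd p) (AllA 0)) end.

Lemma soundP p q : peq (tot Pp) p q -> forall s, run stepP (snd p) s = run stepP (snd q) s.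
Proof. apply (peq_sound (tot Pp) stepP). intros [[e|e]|e]; destruct e. Qed.

Lemma soundQ p q : peq (tot Qq) p q -> forall s, run stepQ (snd p) s = run stepQ (snd q) s.
Proof.
  apply (peq_sound (tot Qq) stepQ). intros [[e|b]|e] s; try destruct e.
  destruct b, s; reflexivity.
Qed.

Lemma Iv_ceq x y : ceq Pp Qq x y -> Iv x = Iv y.
Proof.
  induction 1.
  - destruct H3 as (_ & _ & Hp); destruct H4 as (_ & _ & Hq).
    unfold Iv. rewrite (soundP _ _ Hp), (soundQ _ _ Hq). reflexivity.
  - unfold Iv, pcat, embL, embR, embL_path, embR_path; cbn [fst snd].
    rewrite !run_app, !run_map. reflexivity.
  - reflexivity.
  - auto.
  - congruence.
Qed.

Definition act (x : CompElt Pp Qq) (w : list (option bool)) : CompElt Pp Qq :=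
  comp_act Pp Qq ((tt, []) : path Cc) ((tt, w) : path Ee) x.

Lemma Iv_act x w : Iv (act x w) = run stepF w (Iv x).
Proof.
  destruct x as [[d p] q]. unfold act, comp_act, Iv, pcat, embL, embR, embL_path, embR_path.
  cbn [fst snd map app]. rewrite run_app, run_map. reflexivity.
Qed.

Lemma pok_app {S F} (dom cod : F -> S) a l1 l2 :
  pok dom cod a (l1 ++ l2) <-> pok dom cod a l1 /\ pok dom cod (pend cod a l1) l2.
Proof. induction l1 in a |- *; simpl; [tauto| rewrite IHl1; tauto]. Qed.

Lemma pend_app {S F} (cod : F -> S) a l1 l2 :
  pend cod a (l1 ++ l2) = pend cod (pend cod a l1) l2.
Proof. induction l1 in a |- *; simpl; auto. Qed.

Lemma R_tail (R : UPres Cc Ee) l : forall e,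
  pok (tdom R) (tcod R) (inr e) l -> exists u, l = map inr u.
Proof.
  induction l as [|t l IH]; intros e H; [exists []; reflexivity|].
  destruct H as [Hd Hp]. destruct t as [[f|x]|g]; simpl in Hd.
  - destruct f.
  - discriminate.
  - destruct (IH _ Hp) as [u Hu]. exists (g :: u). subst l; reflexivity.
Qed.

Lemma R_cross (R : UPres Cc Ee) c e y : cross R c e y ->
  exists x u, y = (inl c, inl (inr x) :: map inr u).
Proof.
  destruct y as [s l]; intros (Hp & Hs & Ht). unfold psrc in Hs; simpl in Hs; subst s.
  destruct l as [|t l].
  - unfold ptgt in Ht; simpl in Ht; discriminate.
  - destruct Hp as [Hd Hp]. destruct t as [[f|x]|g].
    + destruct f.
    + exists x. destruct (R_tail R l _ Hp) as [u Hu]. exists u; subst; reflexivity.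
    + simpl in Hd; discriminate.
Qed.

Lemma Epath_ok {A} (R : UPres A Ee) w :
  pok (tdom R) (tcod R) (inr tt) (map inr w) /\ pend (tcod R) (inr tt) (map inr w) = inr tt.
Proof. induction w; simpl; [split; auto| split; [split; [reflexivity| apply IHw]| apply IHw]]. Qed.

Lemma cross_ext {A} (R : UPres A Ee) c e y w : cross R c e y ->
  cross R c tt (fst y, snd y ++ map inr w).
Proof.
  destruct e; intros (Hp & Hs & Ht).
  change (pend (tcod R) (fst y) (snd y) = inr tt) in Ht.
  split; [|split].
  - unfold is_path in *; simpl. apply pok_app; split; auto. change (pok (tdom R) (tcod R) (pend (tcod R) (fst y) (snd y)) (map inr w)). rewrite Ht. apply Epath_ok.
  - exact Hs.
  - unfold ptgt; simpl. rewrite pend_app. change (pend (tcod R) (pend (tcod R) (fst y) (snd y)) (map inr w) = inr tt).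
    rewrite Ht. apply Epath_ok.
Qed.

Lemma peq_ext {A} (R : UPres A Ee) w : forall p q, peq (tot R) p q ->
  ptgt (tot R) p = inr tt -> ptgt (tot R) q = inr tt ->
  peq (tot R) (fst p, snd p ++ map inr w) (fst q, snd q ++ map inr w).
Proof.
  induction w as [|g w IH]; intros p q H Hp Hq.
  - simpl; rewrite !app_nil_r. destruct p, q; exact H.
  - specialize (IH (fst p, snd p ++ [inr g]) (fst q, snd q ++ [inr g])).
    simpl in IH. rewrite <- !app_assoc in IH. simpl in IH. apply IH.
    + apply peq_post; [rewrite Hp; reflexivity | rewrite Hq; reflexivity | exact H].
    + unfold ptgt; simpl. rewrite pend_app. reflexivity.
    + unfold ptgt; simpl. rewrite pend_app. reflexivity.
Qed.

Lemma approx_trans T p q r : approx T p q -> approx T q r -> approx T p r.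
Proof. intros (a & b & c) (d & e & f); repeat split; auto. eapply peq_trans; eauto. Qed.
Lemma approx_sym T p q : approx T p q -> approx T q p.
Proof. intros (a & b & c); repeat split; auto. apply peq_sym; auto. Qed.

Lemma approx_ext {A} (R : UPres A Ee) c c' e e' p q w : cross R c e p -> cross R c' e' q ->
  approx (tot R) p q -> approx (tot R) (fst p, snd p ++ map inr w) (fst q, snd q ++ map inr w).
Proof.
  intros Hp Hq (_ & _ & H). split; [|split].
  - apply (cross_ext R c e p w Hp).
  - apply (cross_ext R c' e' q w Hq).
  - apply peq_ext; auto.
    + destruct Hp as (_ & _ & X). rewrite X. destruct e; reflexivity.
    + destruct Hq as (_ & _ & X). rewrite X. destruct e'; reflexivity.
Qed.

Lemma cvalid_act x w : cvalid Pp Qq tt tt x -> cvalid Pp Qq tt tt (act x w).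
Proof.
  destruct x as [[d p] q]; intros [Hp Hq]; split.
  - destruct p as [s l]; destruct Hp as (Hp1 & Hp2 & Hp3).
    unfold psrc in Hp2; simpl in Hp2; subst s. repeat split; auto.
  - exact (cross_ext Qq d tt q w Hq).
Qed.

Lemma in_sum {T} (f : T -> nat) l a : In a l -> f a <= list_sum (map f l).
Proof. induction l; simpl; [tauto|]. intros [H|H]; [subst; lia| specialize (IHl H); lia]. Qed.

Definition stepR (R : UPres Cc Ee) (n : nat) (sig : psym R -> Fst)
  (t : (Empty_set + psym R) + option bool) (s : Ast) : Ast :=
  match t with inl (inl f) => match f with end | inl (inr x) => embed (sig x)
  | inr l => stepA n l s end.

Lemma runR_form R n sig x u s :
  run (stepR R n sig) (inl (inr x) :: map inr u) s = run (stepA n) u (embed (sig x)).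
Proof.
  change (run (stepR R n sig) (map inr u) (embed (sig x)) = run (stepA n) u (embed (sig x))).
  rewrite run_map. reflexivity.
Qed.

Lemma Epok w : pok (dom Ee) (cod Ee) tt w.
Proof. induction w; simpl; auto. Qed.

Definition w0 (n : nat) : CompElt Pp Qq :=
  (tt, ((inl tt, inl (inr tt) :: repeat (inr tt) n) : path (tot Pp)),
       ((inl tt, [inl (inr tt)]) : path (tot Qq))).

Lemma rep_ok n : pok (tdom Pp) (tcod Pp) (inr tt) (repeat (inr tt) n) /\
  pend (tcod Pp) (inr tt) (repeat (inr tt) n) = inr tt.
Proof. induction n; simpl; [split; auto | split; [split; [reflexivity| apply IHn] | apply IHn]]. Qed.

Lemma w0_valid n : cvalid Pp Qq tt tt (w0 n).
Proof.
  split.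
  - split; [|split].
    + unfold is_path; simpl. split; [reflexivity| apply rep_ok].
    + reflexivity.
    + unfold ptgt; simpl. apply rep_ok.
  - split; [|split]; unfold is_path; simpl; auto.
Qed.

Lemma run_rep m k : run stepP (repeat (inr tt) m) (AllA k) = AllA (m + k).
Proof.
  induction m in k |- *; [reflexivity|].
  change (run stepP (repeat (inr tt) m) (AllA (S k)) = AllA (S m + k)).
  rewrite IHm. f_equal; lia.
Qed.

Lemma Iv_w0 n : Iv (w0 n) = AllA n.
Proof.
  change (run stepP (repeat (inr tt) n) (AllA 0) = AllA n). rewrite run_rep. f_equal; lia.
Qed.

Lemma ceq_w0 n : ceq Pp Qq (act (w0 n) [Some true]) (act (w0 n) [Some false]).
Proof.
  pose proof (cvalid_act (w0 n) [Some true] (w0_valid n)) as [H1 H2].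
  pose proof (cvalid_act (w0 n) [Some false] (w0_valid n)) as [H3 H4].
  change (ceq Pp Qq (tt, ((inl tt, inl (inr tt) :: repeat (inr tt) n) : path (tot Pp)),
                         ((inl tt, [inl (inr tt); inr (Some true)]) : path (tot Qq)))
                    (tt, ((inl tt, inl (inr tt) :: repeat (inr tt) n) : path (tot Pp)),
                         ((inl tt, [inl (inr tt); inr (Some false)]) : path (tot Qq)))).
  eapply (ceq_comp Pp Qq (tt : sort Cc) (tt : sort Ee)); try eassumption.
  - split; [apply H1| split; [apply H1| apply peq_refl]].
  - split; [apply H2| split; [apply H4| exact (peq_ax (tot Qq) (inl (inr false)))]].
Qed.

Lemma no_iso (R : UPres Cc Ee) : UPres_wf R -> UPres_finite R -> ~ comp_iso_pres Pp Qq R.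
Proof.
  intros HRwf HRfin [phi (H1 & H2 & H3 & H4 & H5)].
  assert (Hx : forall x : psym R, cross R tt tt (inl tt, [inl (inr x)])).
  { intros x. split; [|split].
    - unfold is_path; simpl. split; [destruct (pdom R x); reflexivity | exact I].
    - reflexivity.
    - unfold ptgt; simpl. destruct (pcod R x); reflexivity. }
  assert (Hch : forall x, {s | cvalid Pp Qq tt tt s /\
            approx (tot R) (phi tt tt s) (inl tt, [inl (inr x)])}).
  { intros x; apply constructive_indefinite_description.
    destruct (H4 tt tt _ (Hx x)) as [s [Hs Ha]]. eauto. }
  set (sx := fun x => proj1_sig (Hch x)).
  assert (Hsx : forall x, cvalid Pp Qq tt tt (sx x) /\
            approx (tot R) (phi tt tt (sx x)) (inl tt, [inl (inr x)])).
  { intros x; exact (proj2_sig (Hch x)). }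
  clearbody sx. clear Hch.
  assert (Hnat : forall x w, cvalid Pp Qq tt tt x ->
     approx (tot R) (phi tt tt (act x w)) (inl tt, snd (phi tt tt x) ++ map inr w)).
  { intros x w Hv. refine (H5 tt tt tt tt (tt, []) (tt, w) x I eq_refl eq_refl (Epok w) eq_refl _ Hv).
    destruct (ptgt Ee (tt, w)); reflexivity. }
  assert (Hxw : forall x w, approx (tot R) (phi tt tt (act (sx x) w))
                                     (inl tt, inl (inr x) :: map inr w)).
  { intros x w. destruct (Hsx x) as [Hv Ha].
    eapply approx_trans; [apply Hnat, Hv|].
    pose proof (H1 _ _ _ Hv) as Hc.
    pose proof (approx_ext R tt tt tt tt _ _ w Hc (Hx x) Ha) as He.
    destruct Hc as (_ & Hs & _). unfold psrc in Hs. rewrite Hs in He. exact He. }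
  set (sig := fun x => Iv (sx x)).
  destruct HRfin as (_ & _ & [lx Hlx] & [le Hle]).
  set (S1 := list_sum (map (fun x => bound (sig x)) lx)).
  set (S2 := list_sum (map (fun e => length (snd (plhs R e)) + length (snd (prhs R e))) le)).
  set (n := S (S1 + S2)).
  assert (Kx : forall x, bound (sig x) <= S1).
  { intros x. apply (in_sum (fun x => bound (sig x))), Hlx. }
  assert (Ke : forall e, length (snd (plhs R e)) + length (snd (prhs R e)) <= S2).
  { intros e. apply (in_sum (fun e => length (snd (plhs R e)) + length (snd (prhs R e)))), Hle. }
  assert (Hcomm : forall x w, bound (sig x) + length w < n ->
            run (stepA n) w (embed (sig x)) = embed (run stepF w (sig x))).
  { intros x w Hb. apply commute.
    - intro E. rewrite E in Hb. simpl in Hb. lia.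
    - intro E. apply runF_bound in E. lia. }
  assert (Hax : forall e s, run (stepR R n sig) (snd (lhs (tot R) e)) s
                          = run (stepR R n sig) (snd (rhs (tot R) e)) s).
  { intros [[f|e]|f] s; [destruct f| |destruct f].
    destruct (HRwf e) as ([c1 [e1 Hl]] & [c2 [e2 Hr]] & _ & _).
    assert (Hlr : approx (tot R) (plhs R e) (prhs R e)).
    { split; [apply Hl | split; [apply Hr | exact (peq_ax (tot R) (inl (inr e)))]]. }
    destruct (R_cross R _ _ _ Hl) as [x [w Hlw]].
    destruct (R_cross R _ _ _ Hr) as [x' [w' Hrw]].
    pose proof (Ke e) as Ke'. rewrite Hlw, Hrw in Ke'. simpl in Ke'. rewrite !length_map in Ke'.
    change (run (stepR R n sig) (snd (plhs R e)) s = run (stepR R n sig) (snd (prhs R e)) s).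
    rewrite Hlw, Hrw in *. cbn [snd]. rewrite !runR_form.
    destruct c1, c2.
    assert (Hce : ceq Pp Qq (act (sx x) w) (act (sx x') w')).
    { apply (H3 tt tt); try apply cvalid_act, Hsx.
      eapply approx_trans; [apply Hxw|]. eapply approx_trans; [exact Hlr|].
      apply approx_sym, Hxw. }
    apply Iv_ceq in Hce. rewrite !Iv_act in Hce.
    rewrite !Hcomm.
    - unfold sig; rewrite Hce; reflexivity.
    - pose proof (Kx x'); lia.
    - pose proof (Kx x); lia. }
  assert (Hsound : forall p q, approx (tot R) p q -> forall s,
            run (stepR R n sig) (snd p) s = run (stepR R n sig) (snd q) s).
  { intros p q (_ & _ & H). apply (peq_sound (tot R) (stepR R n sig) Hax _ _ H). }
  pose proof (w0_valid n) as Hw.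
  pose proof (H2 tt tt _ _ (cvalid_act _ _ Hw) (cvalid_act _ _ Hw) (ceq_w0 n)) as Hbc.
  pose proof (Hnat (w0 n) [Some true] Hw) as Nb.
  pose proof (Hnat (w0 n) [Some false] Hw) as Nc.
  destruct (R_cross R _ _ _ (H1 _ _ _ Hw)) as [x [u Hy]].
  assert (Hxu : ceq Pp Qq (act (sx x) u) (w0 n)).
  { apply (H3 tt tt); [apply cvalid_act, Hsx | exact Hw |].
    rewrite Hy. apply Hxw. }
  apply Iv_ceq in Hxu. rewrite Iv_act, Iv_w0 in Hxu.
  assert (Hfin := Hsound _ _ (approx_trans _ _ _ _ (approx_sym _ _ _ Nb)
                                (approx_trans _ _ _ _ Hbc Nc)) HO).
  rewrite Hy in Hfin. cbn [snd] in Hfin.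
  change (run (stepR R n sig) (inl (inr x) :: map inr u ++ map inr [Some true]) HO =
          run (stepR R n sig) (inl (inr x) :: map inr u ++ map inr [Some false]) HO) in Hfin.
  rewrite <- !map_app, !runR_form, !run_app in Hfin.
  rewrite commute in Hfin.
  - unfold sig in Hfin. rewrite Hxu in Hfin. simpl in Hfin. rewrite Nat.eqb_refl in Hfin. discriminate.
  - intro E. pose proof (Kx x) as K. unfold sig in *. rewrite E in K. simpl in K. lia.
  - unfold sig in *. rewrite Hxu. discriminate.
Qed.

Theorem mainTheorem17 :
  exists (C D E : CatPres) (P : UPres C D) (Q : UPres D E),
    CatPres_wf C /\ CatPres_wf D /\ CatPres_wf E /\
    CatPres_finite C /\ CatPres_finite D /\ CatPres_finite E /\
    UPres_wf P /\ UPres_finite P /\ nongenerative P /\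
    UPres_wf Q /\ UPres_finite Q /\ nongenerative Q /\
    forall R : UPres C E, UPres_wf R -> UPres_finite R -> ~ comp_iso_pres P Q R.
Proof.
  assert (FC : CatPres_finite Cc).
  { split; [exists [tt]; intros []; simpl; auto| split; exists []; intros []]. }
  assert (FD : CatPres_finite Dd).
  { split; [exists [tt]; intros []; simpl; auto| split; [exists [tt]; intros []; simpl; auto| exists []; intros []]]. }
  assert (FE : CatPres_finite Ee).
  { split; [exists [tt]; intros []; simpl; auto| split; [exists [None; Some true; Some false]; intros [[|]|]; simpl; auto 10| exists []; intros []]]. }
  exists Cc, Dd, Ee, Pp, Qq.
  split; [intros []|]. split; [intros []|]. split; [intros []|].
  split; [exact FC|]. split; [exact FD|]. split; [exact FE|].
  split; [intros []|].
  split; [split; [exact FC| split; [exact FD| split; [exists [tt]; intros []; simpl; auto| exists []; intros []]]]|].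
  split; [intros f; destruct f|].
  split.
  { intros b; destruct b; repeat split; try (exists tt, tt); repeat split. }
  split; [split; [exact FD| split; [exact FE| split; [exists [tt]; intros []; simpl; auto| exists [true; false]; intros []; simpl; auto]]]|].
  split.
  { intros [] [] _. exists tt, (tt, [None]). split; [exact (Epok [None])|]. split; [reflexivity|].
    split; [repeat split|]. split; [repeat split|].
    exact (peq_ax (tot Qq) (inl (inr true))). }
  exact no_iso.
Qed.
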